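(* Let $a<b$ and let $A\in M_2(C[a,b])$ be such that $A(t)$ is hermitian for every $t\in[a,b]$ and $A$ is continuously differentiable on $[a,b]$ (entrywise). Suppose that $A(t)$ has two distinct eigenvalues for all $t\in[a,b]$ except possibly at finitely many points, and that at each such exceptional point $t$ the derivative $A'(t)$ has two distinct eigenvalues. Then there exists $U\in M_2(C[a,b])$ with $U(t)$ unitary for every $t\in[a,b]$ such that $U(t)^*A(t)U(t)$ is diagonal for all $t\in[a,b]$.
   Context: $C[a,b]$ denotes the continuous complex-valued functions on $[a,b]$; $M_2(C[a,b])$ the $2\times2$ matrices over it, viewed as continuous maps $[a,b]\to M_2(\mathbb{C})$. $A'(t)$ denotes the entrywise derivative. *)

(* Defs.v *)
From Stdlib Require Import Reals List.
Open Scope R_scope.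

Record Cpx := mkC { re : R ; im : R }.

Definition C0 : Cpx := mkC 0 0.
Definition C1 : Cpx := mkC 1 0.
Definition Cadd (z w : Cpx) : Cpx := mkC (re z + re w) (im z + im w).
Definition Cmul (z w : Cpx) : Cpx :=
  mkC (re z * re w - im z * im w) (re z * im w + im z * re w).
Definition Cconj (z : Cpx) : Cpx := mkC (re z) (- im z).

Record M2 := mkM2 { e11 : Cpx ; e12 : Cpx ; e21 : Cpx ; e22 : Cpx }.

Definition M2mul (X Y : M2) : M2 :=
  mkM2 (Cadd (Cmul (e11 X) (e11 Y)) (Cmul (e12 X) (e21 Y)))
       (Cadd (Cmul (e11 X) (e12 Y)) (Cmul (e12 X) (e22 Y)))
       (Cadd (Cmul (e21 X) (e11 Y)) (Cmul (e22 X) (e21 Y)))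
       (Cadd (Cmul (e21 X) (e12 Y)) (Cmul (e22 X) (e22 Y))).

Definition M2id : M2 := mkM2 C1 C0 C0 C1.

Definition M2adj (X : M2) : M2 :=
  mkM2 (Cconj (e11 X)) (Cconj (e21 X)) (Cconj (e12 X)) (Cconj (e22 X)).

Definition hermitian (X : M2) : Prop := M2adj X = X.
Definition unitary (X : M2) : Prop := M2mul (M2adj X) X = M2id.
Definition diagonal (X : M2) : Prop := e12 X = C0 /\ e21 X = C0.

Definition eigenvalue (X : M2) (lam : Cpx) : Prop :=
  exists v1 v2 : Cpx, (v1 <> C0 \/ v2 <> C0) /\
    Cadd (Cmul (e11 X) v1) (Cmul (e12 X) v2) = Cmul lam v1 /\
    Cadd (Cmul (e21 X) v1) (Cmul (e22 X) v2) = Cmul lam v2.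

Definition two_distinct_eigenvalues (X : M2) : Prop :=
  exists l1 l2 : Cpx, l1 <> l2 /\ eigenvalue X l1 /\ eigenvalue X l2.

Definition Rcont_on (a b : R) (f : R -> R) : Prop :=
  forall t, a <= t <= b -> forall eps, 0 < eps -> exists delta, 0 < delta /\
    forall s, a <= s <= b -> Rabs (s - t) < delta -> Rabs (f s - f t) < eps.

Definition Rderiv_on (a b : R) (f f' : R -> R) : Prop :=
  forall t, a <= t <= b -> forall eps, 0 < eps -> exists delta, 0 < delta /\
    forall s, a <= s <= b -> s <> t -> Rabs (s - t) < delta ->
      Rabs ((f s - f t) / (s - t) - f' t) < eps.

Definition Ccont_on (a b : R) (f : R -> Cpx) : Prop :=
  Rcont_on a b (fun t => re (f t)) /\ Rcont_on a b (fun t => im (f t)).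

Definition Cderiv_on (a b : R) (f f' : R -> Cpx) : Prop :=
  Rderiv_on a b (fun t => re (f t)) (fun t => re (f' t)) /\
  Rderiv_on a b (fun t => im (f t)) (fun t => im (f' t)).

Definition M2cont_on (a b : R) (A : R -> M2) : Prop :=
  Ccont_on a b (fun t => e11 (A t)) /\ Ccont_on a b (fun t => e12 (A t)) /\
  Ccont_on a b (fun t => e21 (A t)) /\ Ccont_on a b (fun t => e22 (A t)).

Definition M2deriv_on (a b : R) (A A' : R -> M2) : Prop :=
  Cderiv_on a b (fun t => e11 (A t)) (fun t => e11 (A' t)) /\
  Cderiv_on a b (fun t => e12 (A t)) (fun t => e12 (A' t)) /\
  Cderiv_on a b (fun t => e21 (A t)) (fun t => e21 (A' t)) /\
  Cderiv_on a b (fun t => e22 (A t)) (fun t => e22 (A' t)).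

(* Main.v *)
Require Import Defs.
From Stdlib Require Import Reals List.
From Coquelicot Require Import Coquelicot.
From Stdlib Require Import Lra Psatz Classical.
Open Scope R_scope.

Definition limw (D : R -> Prop) (t : R) (f : R -> R) (L : R) :=
  filterlim f (within D (locally t)) (locally L).
Lemma lim_eps D t f L : limw D t f L <-> forall eps, 0 < eps -> exists delta, 0 < delta /\
   forall s, D s -> Rabs (s - t) < delta -> Rabs (f s - L) < eps.
Proof.
unfold limw; rewrite filterlim_locally; split.
- intros H eps Heps. destruct (H (mkposreal eps Heps)) as [d Hd].
  exists d; split; [apply cond_pos|]. intros s Ds Hs. apply (Hd s); [exact Hs| exact Ds].
- intros H eps. destruct (H eps (cond_pos eps)) as [d [Hd H']].
  exists (mkposreal d Hd). intros s Hs Ds. apply (H' s Ds Hs).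
Qed.

Lemma lim_plus D t f g L1 L2 : limw D t f L1 -> limw D t g L2 ->
  limw D t (fun s => f s + g s) (L1 + L2).
Proof.
intros H1 H2. unfold limw.
apply (filterlim_comp_2 f g Rplus H1 H2).
apply (filterlim_Rbar_plus (Finite L1) (Finite L2) (Finite (L1+L2))). reflexivity.
Qed.

Lemma lim_mult D t f g L1 L2 : limw D t f L1 -> limw D t g L2 ->
  limw D t (fun s => f s * g s) (L1 * L2).
Proof.
intros H1 H2. unfold limw.
apply (filterlim_comp_2 f g Rmult H1 H2).
apply (filterlim_Rbar_mult (Finite L1) (Finite L2) (Finite (L1*L2))). reflexivity.
Qed.

Lemma lim_comp D t f L g : limw D t f L -> continuity_pt g L ->
  limw D t (fun s => g (f s)) (g L).
Proof.
intros H1 H2. unfold limw. apply continuity_pt_filterlim in H2.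
exact (filterlim_comp _ _ _ f g _ _ _ H1 H2).
Qed.

Lemma lim_inv D t f L : limw D t f L -> L <> 0 -> limw D t (fun s => / f s) (/ L).
Proof.
intros H1 H2. apply lim_comp; auto. apply continuity_pt_inv; auto.
apply continuity_pt_id.
Qed.

Lemma lim_const D t c : limw D t (fun _ => c) c.
Proof. apply lim_eps. intros eps He; exists 1; split; [lra|]. intros.
 rewrite Rminus_diag, Rabs_R0; auto. Qed.

Lemma lim_id D t : limw D t (fun s => s) t.
Proof. apply lim_eps. intros eps He; exists eps; split; auto. Qed.

Lemma lim_opp D t f L : limw D t f L -> limw D t (fun s => - f s) (- L).
Proof. intro H. apply (lim_comp _ _ _ _ Ropp H). apply continuity_pt_opp, continuity_pt_id. Qed.

Lemma lim_minus D t f g L1 L2 : limw D t f L1 -> limw D t g L2 ->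
  limw D t (fun s => f s - g s) (L1 - L2).
Proof. intros; apply lim_plus; auto; apply lim_opp; auto. Qed.

Lemma lim_div D t f g L1 L2 : limw D t f L1 -> limw D t g L2 -> L2 <> 0 ->
  limw D t (fun s => f s / g s) (L1 / L2).
Proof. intros; apply lim_mult; auto; apply lim_inv; auto. Qed.

Lemma lim_sqrt D t f L : limw D t f L -> 0 < L -> limw D t (fun s => sqrt (f s)) (sqrt L).
Proof. intros; apply lim_comp; auto. apply continuity_pt_sqrt; lra. Qed.

Lemma lim_ext_loc D t f g L : (exists d, 0 < d /\ forall s, D s -> Rabs (s - t) < d -> f s = g s) ->
  limw D t f L -> limw D t g L.
Proof.
intros [d0 [Hd0 Hfg]] H. rewrite lim_eps in *. intros eps He.
destruct (H eps He) as [d [Hd H']]. exists (Rmin d d0); split.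
apply Rmin_pos; auto. intros s Ds Hs. rewrite <- Hfg; auto.
apply H'; auto. eapply Rlt_le_trans; [apply Hs| apply Rmin_l].
eapply Rlt_le_trans; [apply Hs| apply Rmin_r].
Qed.

Lemma lim_ext D t f g L : (forall s, D s -> f s = g s) -> limw D t f L -> limw D t g L.
Proof. intros H; apply lim_ext_loc. exists 1; split; [lra|auto]. Qed.

Lemma lim_sub D D' t f L : (forall s, D' s -> D s) -> limw D t f L -> limw D' t f L.
Proof. intros HD H; rewrite lim_eps in *. intros eps He; destruct (H eps He) as [d [Hd H']].
 exists d; split; auto. Qed.

Lemma lim_punct D t f : limw (fun s => D s /\ s <> t) t f (f t) -> limw D t f (f t).
Proof. rewrite !lim_eps. intros H eps He; destruct (H eps He) as [d [Hd H']].
 exists d; split; auto. intros s Ds Hs. destruct (Req_dec s t).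
 subst; rewrite Rminus_diag, Rabs_R0; auto. apply H'; auto. Qed.

Lemma lim_unique D t f L1 L2 : limw D t f L1 -> limw D t f L2 ->
  (forall d, 0 < d -> exists s, D s /\ Rabs (s - t) < d) -> L1 = L2.
Proof.
intros H1 H2 Hd. rewrite lim_eps in *. destruct (Req_dec L1 L2) as [|Hne]; auto.
exfalso. set (e := Rabs (L1 - L2) / 2).
assert (He : 0 < e). { unfold e. assert (L1 - L2 <> 0) by lra. apply Rabs_pos_lt in H. lra. }
destruct (H1 e He) as [d1 [Hd1 H1']]. destruct (H2 e He) as [d2 [Hd2 H2']].
destruct (Hd (Rmin d1 d2)) as [s [Ds Hs]]. apply Rmin_pos; auto.
assert (A1 := H1' s Ds (Rlt_le_trans _ _ _ Hs (Rmin_l _ _))).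
assert (A2 := H2' s Ds (Rlt_le_trans _ _ _ Hs (Rmin_r _ _))).
assert (Rabs (L1 - L2) <= Rabs (f s - L2) + Rabs (f s - L1)).
{ replace (L1 - L2) with ((f s - L2) + - (f s - L1)) by ring.
  eapply Rle_trans; [apply Rabs_triang|]. rewrite Rabs_Ropp. lra. }
unfold e in *. lra.
Qed.

Definition II (a b s : R) := a <= s <= b.

Lemma cont_iff a b f : Rcont_on a b f <-> forall t, II a b t -> limw (II a b) t f (f t).
Proof.
split; intros H t Ht; [apply lim_eps|]; intros eps He.
- destruct (H t Ht eps He) as [d [Hd H']]; exists d; split; auto.
- destruct (proj1 (lim_eps _ _ _ _) (H t Ht) eps He) as [d [Hd H']]; exists d; split; auto.
Qed.

Lemma deriv_iff a b f f' : Rderiv_on a b f f' <-> forall t, II a b t ->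
  limw (fun s => II a b s /\ s <> t) t (fun s => (f s - f t) / (s - t)) (f' t).
Proof.
split; intros H t Ht; [apply lim_eps|]; intros eps He.
- destruct (H t Ht eps He) as [d [Hd H']]; exists d; split; auto.
  intros s [Ds Hst] Hs; apply H'; auto.
- destruct (proj1 (lim_eps _ _ _ _) (H t Ht) eps He) as [d [Hd H']]; exists d; split; auto.
Qed.

Lemma dense a b t : a < b -> II a b t -> forall d, 0 < d ->
  exists s, (II a b s /\ s <> t) /\ Rabs (s - t) < d.
Proof.
intros Hab [Ht1 Ht2] d Hd. unfold II.
destruct (Rlt_dec t b).
- exists (t + Rmin (d/2) (b - t)).
  assert (0 < Rmin (d/2) (b-t)) by (apply Rmin_pos; lra).
  assert (Rmin (d/2) (b-t) <= d/2) by apply Rmin_l.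
  assert (Rmin (d/2) (b-t) <= b - t) by apply Rmin_r.
  split; [split; [split|]|]; try lra. rewrite Rabs_right; lra.
- exists (t - Rmin (d/2) (b - a)).
  assert (0 < Rmin (d/2) (b-a)) by (apply Rmin_pos; lra).
  assert (Rmin (d/2) (b-a) <= d/2) by apply Rmin_l.
  assert (Rmin (d/2) (b-a) <= b - a) by apply Rmin_r.
  split; [split; [split|]|]; try lra. rewrite Rabs_left; lra.
Qed.

Lemma cont_sub a b c d f : a <= c -> d <= b -> Rcont_on a b f -> Rcont_on c d f.
Proof. intros H1 H2 H t Ht eps He. destruct (H t ltac:(lra) eps He) as [del [Hd H']].
 exists del; split; auto. intros s Hs; apply H'; lra. Qed.

Lemma cont_point a f : Rcont_on a a f.
Proof. intros t Ht eps He; exists 1; split; [lra|]. intros s Hs _.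
 replace s with t by lra. rewrite Rminus_diag, Rabs_R0; auto. Qed.

Lemma cont_glue a c e f g : a <= c <= e -> Rcont_on a c f -> Rcont_on c e g -> f c = g c ->
  Rcont_on a e (fun s => if Rle_dec s c then f s else g s).
Proof.
intros Hc Hf Hg Hfg t Ht eps He.
destruct (Rtotal_order t c) as [Hlt|[Heq|Hgt]].
- destruct (Hf t ltac:(lra) eps He) as [d [Hd H']].
  exists (Rmin d (c - t)); split. apply Rmin_pos; lra.
  intros s Hs Hst. assert (Rabs (s - t) < d) by (eapply Rlt_le_trans; [apply Hst|apply Rmin_l]).
  assert (Rabs (s - t) < c - t) by (eapply Rlt_le_trans; [apply Hst|apply Rmin_r]).
  assert (s < c). { apply Rabs_def2 in H0. lra. }
  destruct (Rle_dec s c); [|lra]. destruct (Rle_dec t c); [|lra]. apply H'; auto; lra.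
- subst t. destruct (Hf c ltac:(lra) eps He) as [d1 [Hd1 H1]].
  destruct (Hg c ltac:(lra) eps He) as [d2 [Hd2 H2]].
  exists (Rmin d1 d2); split. apply Rmin_pos; lra.
  intros s Hs Hst. assert (Rabs (s - c) < d1) by (eapply Rlt_le_trans; [apply Hst|apply Rmin_l]).
  assert (Rabs (s - c) < d2) by (eapply Rlt_le_trans; [apply Hst|apply Rmin_r]).
  destruct (Rle_dec c c); [|lra]. destruct (Rle_dec s c).
  + apply H1; auto; lra.
  + rewrite Hfg. apply H2; auto; lra.
- destruct (Hg t ltac:(lra) eps He) as [d [Hd H']].
  exists (Rmin d (t - c)); split. apply Rmin_pos; lra.
  intros s Hs Hst. assert (Rabs (s - t) < d) by (eapply Rlt_le_trans; [apply Hst|apply Rmin_l]).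
  assert (Rabs (s - t) < t - c) by (eapply Rlt_le_trans; [apply Hst|apply Rmin_r]).
  assert (c < s). { apply Rabs_def2 in H0. lra. }
  destruct (Rle_dec s c); [lra|]. destruct (Rle_dec t c); [lra|]. apply H'; auto; lra.
Qed.

Definition clamp a b s := Rmax a (Rmin s b).

Lemma clamp_in a b s : a <= b -> a <= clamp a b s <= b.
Proof. intros; unfold clamp, Rmax, Rmin. repeat destruct Rle_dec; lra. Qed.

Lemma clamp_id a b s : a <= s <= b -> clamp a b s = s.
Proof. intros; unfold clamp, Rmax, Rmin. repeat destruct Rle_dec; lra. Qed.

Lemma clamp_lip a b x y : a <= b -> Rabs (clamp a b y - clamp a b x) <= Rabs (y - x).
Proof. intros; unfold clamp, Rmax, Rmin.
 repeat destruct Rle_dec; unfold Rabs; repeat destruct Rcase_abs; lra. Qed.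

Lemma unif a b f : a <= b -> Rcont_on a b f -> forall eps, 0 < eps -> exists d, 0 < d /\
  forall s t, a <= s <= b -> a <= t <= b -> Rabs (s - t) < d -> Rabs (f s - f t) < eps.
Proof.
intros Hab Hf eps He.
assert (Hc : forall x, (fun c => a <= c <= b) x -> continuity_pt (fun s => f (clamp a b s)) x).
{ intros x _. unfold continuity_pt, continue_in, limit1_in, limit_in; simpl; unfold R_dist.
  intros e He'. destruct (Hf (clamp a b x) (clamp_in a b x Hab) e He') as [d [Hd H']].
  exists d; split; auto. intros y [_ Hy]. apply H'. apply clamp_in; auto.
  eapply Rle_lt_trans; [apply clamp_lip; auto|auto]. }
destruct (Heine _ _ (compact_P3 a b) Hc (mkposreal eps He)) as [d Hd].
exists d; split; [apply cond_pos|]. intros s t Hs Ht Hst.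
rewrite <- (clamp_id a b s), <- (clamp_id a b t) by auto. apply Hd; auto.
Qed.

Definition Nq1 (m1 m2 m3 a1 a2 b1 b2 : R) := m1*a1 + m2*b1 - m3*b2.
Definition Nq2 (m1 m2 m3 a1 a2 b1 b2 : R) := m1*a2 + m2*b2 + m3*b1.
Definition Nq3 (m1 m2 m3 a1 a2 b1 b2 : R) := m2*a1 + m3*a2 - m1*b1.
Definition Nq4 (m1 m2 m3 a1 a2 b1 b2 : R) := m2*a2 - m3*a1 - m1*b2.
Definition eig m1 m2 m3 a1 a2 b1 b2 :=
  Nq1 m1 m2 m3 a1 a2 b1 b2 = a1 /\ Nq2 m1 m2 m3 a1 a2 b1 b2 = a2 /\
  Nq3 m1 m2 m3 a1 a2 b1 b2 = b1 /\ Nq4 m1 m2 m3 a1 a2 b1 b2 = b2.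
Definition nrm2 a1 a2 b1 b2 := a1*a1 + a2*a2 + b1*b1 + b2*b2.
Definition Bq1 a1 a2 b1 b2 := a1*a1+a2*a2-b1*b1-b2*b2.
Definition Bq2 a1 a2 b1 b2 := 2*(a1*b1+a2*b2).
Definition Bq3 a1 a2 b1 b2 := 2*(a2*b1 - a1*b2).
Definition Bl m1 m2 m3 a1 a2 b1 b2 :=
  m1 * Bq1 a1 a2 b1 b2 + m2 * Bq2 a1 a2 b1 b2 + m3 * Bq3 a1 a2 b1 b2.

Definition Pq1 m1 m2 m3 a1 a2 b1 b2 := a1 + Nq1 m1 m2 m3 a1 a2 b1 b2.
Definition Pq2 m1 m2 m3 a1 a2 b1 b2 := a2 + Nq2 m1 m2 m3 a1 a2 b1 b2.
Definition Pq3 m1 m2 m3 a1 a2 b1 b2 := b1 + Nq3 m1 m2 m3 a1 a2 b1 b2.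
Definition Pq4 m1 m2 m3 a1 a2 b1 b2 := b2 + Nq4 m1 m2 m3 a1 a2 b1 b2.

Lemma nrm2_P m1 m2 m3 a1 a2 b1 b2 : m1*m1+m2*m2+m3*m3 = 1 ->
  nrm2 (Pq1 m1 m2 m3 a1 a2 b1 b2) (Pq2 m1 m2 m3 a1 a2 b1 b2)
       (Pq3 m1 m2 m3 a1 a2 b1 b2) (Pq4 m1 m2 m3 a1 a2 b1 b2)
  = 2 * (nrm2 a1 a2 b1 b2 + Bl m1 m2 m3 a1 a2 b1 b2).
Proof.
intro H.
transitivity (nrm2 a1 a2 b1 b2 + 2 * Bl m1 m2 m3 a1 a2 b1 b2 + (m1*m1+m2*m2+m3*m3) * nrm2 a1 a2 b1 b2).
unfold nrm2, Pq1, Pq2, Pq3, Pq4, Nq1, Nq2, Nq3, Nq4, Bl, Bq1, Bq2, Bq3; ring.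
rewrite H; ring.
Qed.

Lemma eig_scaled m1 m2 m3 a1 a2 b1 b2 k : m1*m1+m2*m2+m3*m3 = 1 ->
  eig m1 m2 m3 (k * Pq1 m1 m2 m3 a1 a2 b1 b2) (k * Pq2 m1 m2 m3 a1 a2 b1 b2)
       (k * Pq3 m1 m2 m3 a1 a2 b1 b2) (k * Pq4 m1 m2 m3 a1 a2 b1 b2).
Proof.
intro H. set (s := m1*m1+m2*m2+m3*m3) in H.
unfold eig; repeat split.
- transitivity (k * (Nq1 m1 m2 m3 a1 a2 b1 b2 + s * a1)).
  unfold s, Pq1, Pq2, Pq3, Pq4, Nq1, Nq2, Nq3, Nq4; ring. rewrite H; unfold Pq1; ring.
- transitivity (k * (Nq2 m1 m2 m3 a1 a2 b1 b2 + s * a2)).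
  unfold s, Pq1, Pq2, Pq3, Pq4, Nq1, Nq2, Nq3, Nq4; ring. rewrite H; unfold Pq2; ring.
- transitivity (k * (Nq3 m1 m2 m3 a1 a2 b1 b2 + s * b1)).
  unfold s, Pq1, Pq2, Pq3, Pq4, Nq1, Nq2, Nq3, Nq4; ring. rewrite H; unfold Pq3; ring.
- transitivity (k * (Nq4 m1 m2 m3 a1 a2 b1 b2 + s * b2)).
  unfold s, Pq1, Pq2, Pq3, Pq4, Nq1, Nq2, Nq3, Nq4; ring. rewrite H; unfold Pq4; ring.
Qed.

Lemma Bl_eig m1 m2 m3 a1 a2 b1 b2 : eig m1 m2 m3 a1 a2 b1 b2 ->
  Bl m1 m2 m3 a1 a2 b1 b2 = nrm2 a1 a2 b1 b2.
Proof.
intros [E1 [E2 [E3 E4]]].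
transitivity (a1 * Nq1 m1 m2 m3 a1 a2 b1 b2 + a2 * Nq2 m1 m2 m3 a1 a2 b1 b2 +
   b1 * Nq3 m1 m2 m3 a1 a2 b1 b2 + b2 * Nq4 m1 m2 m3 a1 a2 b1 b2).
unfold Bl, Bq1, Bq2, Bq3, Nq1, Nq2, Nq3, Nq4; ring.
rewrite E1, E2, E3, E4; unfold nrm2; ring.
Qed.

Lemma B_bounds a1 a2 b1 b2 : nrm2 a1 a2 b1 b2 = 1 ->
  Rabs (Bq1 a1 a2 b1 b2) <= 1 /\ Rabs (Bq2 a1 a2 b1 b2) <= 1 /\ Rabs (Bq3 a1 a2 b1 b2) <= 1.
Proof.
unfold nrm2, Bq1, Bq2, Bq3; intro H.
pose proof (Rle_0_sqr (a1+b1)); pose proof (Rle_0_sqr (a2+b2));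
pose proof (Rle_0_sqr (a1-b1)); pose proof (Rle_0_sqr (a2-b2));
pose proof (Rle_0_sqr (a2+b1)); pose proof (Rle_0_sqr (a1+b2));
pose proof (Rle_0_sqr (a2-b1)); pose proof (Rle_0_sqr (a1-b2));
pose proof (Rle_0_sqr a1); pose proof (Rle_0_sqr a2); pose proof (Rle_0_sqr b1); pose proof (Rle_0_sqr b2);
unfold Rsqr in *; repeat split; apply Rabs_le; split; lra.
Qed.

Lemma Bl_near m1 m2 m3 c1 c2 c3 a1 a2 b1 b2 :
  nrm2 a1 a2 b1 b2 = 1 -> eig c1 c2 c3 a1 a2 b1 b2 ->
  Rabs (m1 - c1) < /4 -> Rabs (m2 - c2) < /4 -> Rabs (m3 - c3) < /4 ->
  / 4 < Bl m1 m2 m3 a1 a2 b1 b2.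
Proof.
intros Hn He H1 H2 H3. assert (Hc := Bl_eig _ _ _ _ _ _ _ He). rewrite Hn in Hc.
destruct (B_bounds _ _ _ _ Hn) as [K1 [K2 K3]].
assert (Bl m1 m2 m3 a1 a2 b1 b2 = Bl c1 c2 c3 a1 a2 b1 b2 + (m1 - c1) * Bq1 a1 a2 b1 b2
   + (m2 - c2) * Bq2 a1 a2 b1 b2 + (m3 - c3) * Bq3 a1 a2 b1 b2) by (unfold Bl; ring).
assert (forall x y, Rabs x < /4 -> Rabs y <= 1 -> - /4 < x * y).
{ intros x y Hx Hy. assert (Rabs (x*y) < /4).
  { rewrite Rabs_mult. assert (0 <= Rabs x) by apply Rabs_pos. assert (0 <= Rabs y) by apply Rabs_pos. nra. }
  apply Rabs_def2 in H0. lra. }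
pose proof (H0 _ _ H3 K3). pose proof (H0 _ _ H2 K2). pose proof (H0 _ _ H1 K1). lra.
Qed.

Ltac lim_tac := repeat match goal with
| |- limw _ _ (fun s => _ - _) _ => apply lim_minus
| |- limw _ _ (fun s => _ + _) _ => apply lim_plus
| |- limw _ _ (fun s => _ * _) _ => apply lim_mult
| |- limw _ _ (fun s => - _) _ => apply lim_opp
| |- limw _ _ (fun _ => ?c) _ => apply lim_const
| H : limw ?D ?t ?f _ |- limw ?D ?t (fun s => ?f s) _ => exact H
| H : limw ?D ?t ?f _ |- limw ?D ?t ?f _ => exact H
end.

Lemma normalized m1 m2 m3 a1 a2 b1 b2 : m1*m1+m2*m2+m3*m3 = 1 ->
  0 < nrm2 (Pq1 m1 m2 m3 a1 a2 b1 b2) (Pq2 m1 m2 m3 a1 a2 b1 b2)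
       (Pq3 m1 m2 m3 a1 a2 b1 b2) (Pq4 m1 m2 m3 a1 a2 b1 b2) ->
  let k := / sqrt (nrm2 (Pq1 m1 m2 m3 a1 a2 b1 b2) (Pq2 m1 m2 m3 a1 a2 b1 b2)
       (Pq3 m1 m2 m3 a1 a2 b1 b2) (Pq4 m1 m2 m3 a1 a2 b1 b2)) in
  nrm2 (k * Pq1 m1 m2 m3 a1 a2 b1 b2) (k * Pq2 m1 m2 m3 a1 a2 b1 b2)
       (k * Pq3 m1 m2 m3 a1 a2 b1 b2) (k * Pq4 m1 m2 m3 a1 a2 b1 b2) = 1 /\
  eig m1 m2 m3 (k * Pq1 m1 m2 m3 a1 a2 b1 b2) (k * Pq2 m1 m2 m3 a1 a2 b1 b2)
       (k * Pq3 m1 m2 m3 a1 a2 b1 b2) (k * Pq4 m1 m2 m3 a1 a2 b1 b2).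
Proof.
intros Hm Hp k. split; [|apply eig_scaled; auto].
set (Q := nrm2 _ _ _ _) in Hp, k.
assert (nrm2 (k * Pq1 m1 m2 m3 a1 a2 b1 b2) (k * Pq2 m1 m2 m3 a1 a2 b1 b2)
       (k * Pq3 m1 m2 m3 a1 a2 b1 b2) (k * Pq4 m1 m2 m3 a1 a2 b1 b2) = k * k * Q) by (unfold Q, nrm2; ring).
rewrite H. unfold k. rewrite <- Rinv_mult, sqrt_sqrt by lra. field. lra.
Qed.

Lemma fixed_pt m1 m2 m3 a1 a2 b1 b2 : m1*m1+m2*m2+m3*m3 = 1 -> nrm2 a1 a2 b1 b2 = 1 ->
  eig m1 m2 m3 a1 a2 b1 b2 ->
  nrm2 (Pq1 m1 m2 m3 a1 a2 b1 b2) (Pq2 m1 m2 m3 a1 a2 b1 b2)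
       (Pq3 m1 m2 m3 a1 a2 b1 b2) (Pq4 m1 m2 m3 a1 a2 b1 b2) = 4 /\
  / sqrt 4 * Pq1 m1 m2 m3 a1 a2 b1 b2 = a1 /\ / sqrt 4 * Pq2 m1 m2 m3 a1 a2 b1 b2 = a2 /\
  / sqrt 4 * Pq3 m1 m2 m3 a1 a2 b1 b2 = b1 /\ / sqrt 4 * Pq4 m1 m2 m3 a1 a2 b1 b2 = b2.
Proof.
intros Hm Hn He. rewrite nrm2_P, Bl_eig, Hn by auto.
replace 4 with (2*2) by ring. rewrite sqrt_square by lra.
destruct He as [E1 [E2 [E3 E4]]]. unfold Pq1, Pq2, Pq3, Pq4. rewrite E1, E2, E3, E4.
repeat split.
all: lra.
Qed.

Lemma eig_exists m1 m2 m3 : m1*m1+m2*m2+m3*m3 = 1 ->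
  exists a1 a2 b1 b2, nrm2 a1 a2 b1 b2 = 1 /\ eig m1 m2 m3 a1 a2 b1 b2.
Proof.
intro Hm. destruct (Rlt_dec (-1) m1).
- assert (0 < nrm2 (Pq1 m1 m2 m3 1 0 0 0) (Pq2 m1 m2 m3 1 0 0 0) (Pq3 m1 m2 m3 1 0 0 0) (Pq4 m1 m2 m3 1 0 0 0)).
  { rewrite nrm2_P by auto. unfold nrm2, Bl, Bq1, Bq2, Bq3. lra. }
  destruct (normalized _ _ _ 1 0 0 0 Hm H) as [X Y]. eexists _, _, _, _; split; [exact X| exact Y].
- assert (0 < nrm2 (Pq1 m1 m2 m3 0 0 1 0) (Pq2 m1 m2 m3 0 0 1 0) (Pq3 m1 m2 m3 0 0 1 0) (Pq4 m1 m2 m3 0 0 1 0)).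
  { rewrite nrm2_P by auto. unfold nrm2, Bl, Bq1, Bq2, Bq3. lra. }
  destruct (normalized _ _ _ 0 0 1 0 Hm H) as [X Y]. eexists _, _, _, _; split; [exact X| exact Y].
Qed.

Lemma lift a b (m1 m2 m3 : R -> R) : a < b ->
  Rcont_on a b m1 -> Rcont_on a b m2 -> Rcont_on a b m3 ->
  (forall t, a <= t <= b -> m1 t * m1 t + m2 t * m2 t + m3 t * m3 t = 1) ->
  exists u1 u2 u3 u4 : R -> R, Rcont_on a b u1 /\ Rcont_on a b u2 /\
    Rcont_on a b u3 /\ Rcont_on a b u4 /\
    forall t, a <= t <= b -> nrm2 (u1 t) (u2 t) (u3 t) (u4 t) = 1 /\
      eig (m1 t) (m2 t) (m3 t) (u1 t) (u2 t) (u3 t) (u4 t).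
Proof.
intros Hab C1 C2 C3 Hm.
assert (Hq : 0 < /4) by lra.
destruct (unif a b m1 ltac:(lra) C1 _ Hq) as [d1 [Hd1 U1]].
destruct (unif a b m2 ltac:(lra) C2 _ Hq) as [d2 [Hd2 U2]].
destruct (unif a b m3 ltac:(lra) C3 _ Hq) as [d3 [Hd3 U3]].
set (d := Rmin d1 (Rmin d2 d3)).
assert (Hd : 0 < d) by (apply Rmin_pos; auto; apply Rmin_pos; auto).
assert (Hdd1 : d <= d1) by apply Rmin_l.
assert (Hdd2 : d <= d2) by (eapply Rle_trans; [apply Rmin_r|apply Rmin_l]).
assert (Hdd3 : d <= d3) by (eapply Rle_trans; [apply Rmin_r|apply Rmin_r]).
destruct (archimed_cor1 (d / (b - a))) as [N [HN HN0]].
{ apply Rdiv_lt_0_compat; lra. }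
assert (HNp : 0 < INR N) by (apply lt_0_INR; auto).
set (h := (b - a) / INR N).
assert (Hh : 0 < h) by (apply Rdiv_lt_0_compat; lra).
assert (Hhd : h < d).
{ unfold h, Rdiv. apply Rmult_lt_compat_l with (r := b - a) in HN; [|lra].
  replace ((b - a) * (d / (b - a))) with d in HN by (field; lra). exact HN. }
assert (HNh : INR N * h = b - a) by (unfold h; field; lra).
assert (Lm : forall (m : R -> R) c e, Rcont_on a b m -> a <= c -> e <= b -> forall t, II c e t ->
   limw (II c e) t m (m t)).
{ intros m c e Cm Hc He t Ht. apply (lim_sub (II a b)). unfold II; intros; lra.
  apply cont_iff; auto. unfold II in *; lra. }
assert (Claim : forall k, (k <= N)%nat -> exists u1 u2 u3 u4 : R -> R,
  Rcont_on a (a + INR k * h) u1 /\ Rcont_on a (a + INR k * h) u2 /\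
  Rcont_on a (a + INR k * h) u3 /\ Rcont_on a (a + INR k * h) u4 /\
  forall t, a <= t <= a + INR k * h -> nrm2 (u1 t) (u2 t) (u3 t) (u4 t) = 1 /\
      eig (m1 t) (m2 t) (m3 t) (u1 t) (u2 t) (u3 t) (u4 t)).
{ induction k as [|k IH]; intro Hk.
  - simpl INR. replace (a + 0 * h) with a by ring.
    destruct (eig_exists _ _ _ (Hm a ltac:(lra))) as [e1 [e2 [e3 [e4 [He1 He2]]]]].
    exists (fun _ => e1), (fun _ => e2), (fun _ => e3), (fun _ => e4).
    do 4 (split; [apply cont_point|]). intros t0 Ht0. replace t0 with a by lra. auto.
  - destruct (IH ltac:(lia)) as [u1 [u2 [u3 [u4 [K1 [K2 [K3 [K4 K5]]]]]]]].
    set (c := a + INR k * h) in *.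
    assert (Hc : a <= c) by (unfold c; assert (0 <= INR k * h) by (apply Rmult_le_pos; [apply pos_INR|lra]); lra).
    assert (Hc' : c + h <= b).
    { assert (INR (S k) <= INR N) by (apply le_INR; auto). rewrite S_INR in H. apply Rmult_le_compat_r with (r:=h) in H; [|lra]. unfold c. lra. }
    replace (a + INR (S k) * h) with (c + h) by (unfold c; rewrite S_INR; ring).
    destruct (K5 c ltac:(lra)) as [Hn He].
    set (e1 := u1 c) in *. set (e2 := u2 c) in *. set (e3 := u3 c) in *. set (e4 := u4 c) in *.
    set (Q := fun s => nrm2 (Pq1 (m1 s) (m2 s) (m3 s) e1 e2 e3 e4) (Pq2 (m1 s) (m2 s) (m3 s) e1 e2 e3 e4)
                (Pq3 (m1 s) (m2 s) (m3 s) e1 e2 e3 e4) (Pq4 (m1 s) (m2 s) (m3 s) e1 e2 e3 e4)).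
    assert (HQ : forall s, c <= s <= c + h -> 0 < Q s).
    { intros s Hs. unfold Q. rewrite nrm2_P by (apply Hm; lra).
      assert (Rabs (s - c) < d) by (rewrite Rabs_right; lra).
      assert (/4 < Bl (m1 s) (m2 s) (m3 s) e1 e2 e3 e4).
      { apply (Bl_near _ _ _ (m1 c) (m2 c) (m3 c)); auto.
        apply U1; lra. apply U2; lra. apply U3; lra. }
      rewrite Hn; lra. }
    destruct (fixed_pt _ _ _ _ _ _ _ (Hm c ltac:(lra)) Hn He) as [F0 [F1 [F2 [F3 F4]]]].
    assert (LQ : forall t, II c (c + h) t -> limw (II c (c+h)) t (fun s => / sqrt (Q s)) (/ sqrt (Q t))).
    { intros t Ht. assert (0 < Q t) by (apply HQ; exact Ht).
      apply lim_inv; [apply lim_sqrt; auto|]. 2: { apply Rgt_not_eq, sqrt_lt_R0; auto. }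
      assert (M1 := Lm m1 c (c+h) C1 Hc Hc' t Ht).
      assert (M2 := Lm m2 c (c+h) C2 Hc Hc' t Ht).
      assert (M3 := Lm m3 c (c+h) C3 Hc Hc' t Ht).
      unfold Q, nrm2, Pq1, Pq2, Pq3, Pq4, Nq1, Nq2, Nq3, Nq4. lim_tac. }
    exists (fun s => if Rle_dec s c then u1 s else / sqrt (Q s) * Pq1 (m1 s) (m2 s) (m3 s) e1 e2 e3 e4).
    exists (fun s => if Rle_dec s c then u2 s else / sqrt (Q s) * Pq2 (m1 s) (m2 s) (m3 s) e1 e2 e3 e4).
    exists (fun s => if Rle_dec s c then u3 s else / sqrt (Q s) * Pq3 (m1 s) (m2 s) (m3 s) e1 e2 e3 e4).
    exists (fun s => if Rle_dec s c then u4 s else / sqrt (Q s) * Pq4 (m1 s) (m2 s) (m3 s) e1 e2 e3 e4).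
    assert (Q c = 4) by exact F0.
    refine (conj _ (conj _ (conj _ (conj _ _)))).
    1-4: apply cont_glue; [lra|auto| |]; 
      [ apply cont_iff; intros t Ht;
        assert (M1 := Lm m1 c (c+h) C1 Hc Hc' t Ht);
        assert (M2 := Lm m2 c (c+h) C2 Hc Hc' t Ht);
        assert (M3 := Lm m3 c (c+h) C3 Hc Hc' t Ht);
        apply lim_mult; [apply LQ; auto|];
        unfold Pq1, Pq2, Pq3, Pq4, Nq1, Nq2, Nq3, Nq4; lim_tac
      | rewrite H; symmetry; auto ].
    all: intros t Ht; destruct (Rle_dec t c); [apply K5; lra|].
    all: apply (normalized _ _ _ e1 e2 e3 e4 (Hm t ltac:(lra)) (HQ t ltac:(lra))).
}
destruct (Claim N (le_n N)) as [u1 [u2 [u3 [u4 [K1 [K2 [K3 [K4 K5]]]]]]]].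
rewrite HNh in *. replace (a + (b - a)) with b in * by ring.
exists u1, u2, u3, u4. refine (conj K1 (conj K2 (conj K3 (conj K4 _)))). exact K5.
Qed.

Definition Umat (a1 a2 b1 b2 : R) := mkM2 (mkC a1 a2) (mkC (-b1) b2) (mkC b1 b2) (mkC a1 (-a2)).

Lemma Cpx_eq0 z : re z = 0 -> im z = 0 -> z = C0.
Proof. destruct z; simpl; intros; subst; reflexivity. Qed.

Lemma diag_ok s mu m1 m2 m3 a1 a2 b1 b2 : eig m1 m2 m3 a1 a2 b1 b2 ->
  diagonal (M2mul (M2mul (M2adj (Umat a1 a2 b1 b2))
     (mkM2 (mkC (s + mu*m1) 0) (mkC (mu*m2) (mu*m3)) (mkC (mu*m2) (-(mu*m3))) (mkC (s - mu*m1) 0)))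
     (Umat a1 a2 b1 b2)).
Proof.
intros [E1 [E2 [E3 E4]]].
set (r1 := Nq1 m1 m2 m3 a1 a2 b1 b2 - a1). set (i1 := Nq2 m1 m2 m3 a1 a2 b1 b2 - a2).
set (r2 := Nq3 m1 m2 m3 a1 a2 b1 b2 - b1). set (i2 := Nq4 m1 m2 m3 a1 a2 b1 b2 - b2).
assert (r1 = 0) by (unfold r1; lra). assert (i1 = 0) by (unfold i1; lra).
assert (r2 = 0) by (unfold r2; lra). assert (i2 = 0) by (unfold i2; lra).
unfold diagonal; split; apply Cpx_eq0.
- transitivity (mu * ((a1*r2 - a2*i2) - (b1*r1 - b2*i1))).
  unfold Umat, r1, i1, r2, i2, M2mul, M2adj, Cadd, Cmul, Cconj, Nq1, Nq2, Nq3, Nq4; simpl; ring.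
  rewrite H, H0, H1, H2; ring.
- transitivity (mu * (-(a1*i2 + a2*r2) + (b1*i1 + b2*r1))).
  unfold Umat, r1, i1, r2, i2, M2mul, M2adj, Cadd, Cmul, Cconj, Nq1, Nq2, Nq3, Nq4; simpl; ring.
  rewrite H, H0, H1, H2; ring.
- transitivity (mu * ((a1*r2 - a2*i2) - (b1*r1 - b2*i1))).
  unfold Umat, r1, i1, r2, i2, M2mul, M2adj, Cadd, Cmul, Cconj, Nq1, Nq2, Nq3, Nq4; simpl; ring.
  rewrite H, H0, H1, H2; ring.
- transitivity (- (mu * (-(a1*i2 + a2*r2) + (b1*i1 + b2*r1)))).
  unfold Umat, r1, i1, r2, i2, M2mul, M2adj, Cadd, Cmul, Cconj, Nq1, Nq2, Nq3, Nq4; simpl; ring.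
  rewrite H, H0, H1, H2; ring.
Qed.

Lemma unitary_ok a1 a2 b1 b2 : nrm2 a1 a2 b1 b2 = 1 -> unitary (Umat a1 a2 b1 b2).
Proof.
unfold nrm2, unitary, Umat, M2mul, M2adj, M2id, Cadd, Cmul, Cconj, C1, C0; simpl; intro H.
f_equal; apply f_equal2; try ring; rewrite <- H; ring.
Qed.

Lemma herm_parts X : hermitian X ->
  im (e11 X) = 0 /\ im (e22 X) = 0 /\ re (e21 X) = re (e12 X) /\ im (e21 X) = - im (e12 X).
Proof.
unfold hermitian; intro H.
assert (H11 := f_equal (fun Y => im (e11 Y)) H). assert (H22 := f_equal (fun Y => im (e22 Y)) H).
assert (H21r := f_equal (fun Y => re (e21 Y)) H). assert (H21i := f_equal (fun Y => im (e21 Y)) H).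
simpl in *. repeat split; lra.
Qed.

Lemma eig_scalar X lam : eigenvalue X lam -> e12 X = C0 -> e21 X = C0 -> e22 X = e11 X ->
  lam = e11 X.
Proof.
intros [v1 [v2 [Hv [E1 E2]]]] H12 H21 H22. rewrite H12 in E1. rewrite H21, H22 in E2.
destruct (e11 X) as [p pi]. destruct lam as [lr li]. destruct v1 as [x1 y1]. destruct v2 as [x2 y2].
unfold Cadd, Cmul, C0 in *; simpl in *.
injection E1; injection E2; intros F1 F2 F3 F4.
assert (K : forall x y, (x <> 0 \/ y <> 0) -> (p - lr) * x - (pi - li) * y = 0 ->
   (p - lr) * y + (pi - li) * x = 0 -> p = lr /\ pi = li).
{ intros x y Hxy G1 G2.
  assert ((p - lr) * (x*x + y*y) = 0).
  { replace ((p - lr) * (x*x + y*y)) with (x * ((p - lr) * x - (pi - li) * y) + y * ((p - lr) * y + (pi - li) * x)) by ring.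
    rewrite G1, G2; ring. }
  assert ((pi - li) * (x*x + y*y) = 0).
  { replace ((pi - li) * (x*x + y*y)) with (- y * ((p - lr) * x - (pi - li) * y) + x * ((p - lr) * y + (pi - li) * x)) by ring.
    rewrite G1, G2; ring. }
  assert (x*x + y*y <> 0). { destruct Hxy; [assert (0 < x*x) by nra| assert (0 < y*y) by nra]; nra. }
  apply Rmult_integral in H; apply Rmult_integral in H0. intuition lra. }
assert (p = lr /\ pi = li).
{ destruct Hv as [Hv|Hv].
  - apply (K x1 y1); [|lra|lra]. destruct (Req_dec x1 0); [|auto]. destruct (Req_dec y1 0); [|auto].
    subst; exfalso; apply Hv; reflexivity.
  - apply (K x2 y2); [|lra|lra]. destruct (Req_dec x2 0); [|auto]. destruct (Req_dec y2 0); [|auto].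
    subst; exfalso; apply Hv; reflexivity. }
destruct H; subst; reflexivity.
Qed.

Lemma scalar_not_two X : e12 X = C0 -> e21 X = C0 -> e22 X = e11 X -> ~ two_distinct_eigenvalues X.
Proof.
intros H1 H2 H3 [l1 [l2 [Hne [E1 E2]]]]. apply Hne.
rewrite (eig_scalar _ _ E1), (eig_scalar _ _ E2); auto.
Qed.

Lemma mkC_eta z : z = mkC (re z) (im z).
Proof. destruct z; reflexivity. Qed.

Lemma Cpx_ext z w : re z = re w -> im z = im w -> z = w.
Proof. destruct z, w; simpl; intros; subst; reflexivity. Qed.

Lemma deriv_lin a b f f1 g g1 k t : a < b -> II a b t -> Rderiv_on a b f f1 -> Rderiv_on a b g g1 ->
  (forall s, II a b s -> f s = k * g s) -> f1 t = k * g1 t.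
Proof.
intros Hab Ht Hf Hg Hfg. rewrite deriv_iff in Hf, Hg.
apply (lim_unique (fun s => II a b s /\ s <> t) t (fun s => (f s - f t) / (s - t))).
- apply Hf; auto.
- apply (lim_ext _ _ (fun s => k * ((g s - g t) / (s - t)))).
  + intros s [Hs Hst]. rewrite !Hfg by auto. field. lra.
  + apply lim_mult; [apply lim_const| apply Hg; auto].
- intros d Hd. destruct (dense a b t Hab Ht d Hd) as [s Hs]. exists s; auto.
Qed.

Lemma finite_set (l : list R) : forall (P : R -> Prop), (forall z, P z -> In z l) ->
  exists Z, NoDup Z /\ forall z, In z Z <-> P z.
Proof.
induction l as [|a l IH]; intros P HP.
- exists nil; split; [constructor|]. intro z; split; [intros []|intro H; apply (HP z H)].
- destruct (IH (fun z => P z /\ z <> a)) as [Z [HZ HZ']].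
  { intros z [Hz Hza]. destruct (HP z Hz); [congruence|auto]. }
  destruct (classic (P a)) as [Pa|nPa].
  + exists (a :: Z); split.
    * constructor; auto. intro H; apply HZ' in H; tauto.
    * intro z; simpl; split.
      -- intros [<-|H]; auto. apply HZ' in H; tauto.
      -- intro Hz. destruct (Req_dec a z); auto. right; apply HZ'; auto.
  + exists Z; split; auto. intro z; rewrite HZ'; split; [tauto|].
    intro Hz; split; auto. intro; subst; tauto.
Qed.

Fixpoint prodZ (Z : list R) (t : R) : R :=
  match Z with nil => 1 | z :: Z' => (t - z) * prodZ Z' t end.

Lemma prodZ_nz Z t : ~ In t Z -> prodZ Z t <> 0.
Proof.
induction Z as [|z Z IH]; simpl; intros H. lra.
apply Rmult_integral_contrapositive_currified. intro; apply H; left; lra.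
apply IH; tauto.
Qed.

Lemma prodZ_lim Z D t : limw D t (prodZ Z) (prodZ Z t).
Proof.
induction Z as [|z Z IH]; simpl. apply lim_const.
apply lim_mult; auto. apply lim_minus; [apply lim_id|apply lim_const].
Qed.

Lemma prodZ_remove Z z t : NoDup Z -> In z Z ->
  prodZ Z t = (t - z) * prodZ (remove Req_EM_T z Z) t.
Proof.
induction Z as [|y Z IH]; simpl; intros ND Hin. destruct Hin.
inversion ND; subst. destruct (Req_EM_T z y).
- subst. destruct Hin as [_|Hin]; [|contradiction].
  rewrite notin_remove; auto.
- destruct Hin as [Hin|Hin]; [congruence|]. simpl. rewrite IH; auto. ring.
Qed.

Lemma avoid Z t : exists d, 0 < d /\ forall z, In z Z -> z <> t -> d <= Rabs (z - t).
Proof.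
induction Z as [|y Z IH].
- exists 1; split; [lra|]. intros z [].
- destruct IH as [d [Hd H]]. destruct (Req_dec y t).
  + exists d; split; auto. intros z [<-|Hz] Hzt; [congruence|auto].
  + exists (Rmin d (Rabs (y - t))); split.
    apply Rmin_pos; auto. apply Rabs_pos_lt; lra.
    intros z [<-|Hz] Hzt. apply Rmin_r. eapply Rle_trans; [apply Rmin_l| auto].
Qed.

Definition wv (Z : list R) (v v' : R -> R) (t : R) : R :=
  if in_dec Req_EM_T t Z then v' t / prodZ (remove Req_EM_T t Z) t else v t / prodZ Z t.

Lemma wv_in Z v v' t : In t Z -> wv Z v v' t = v' t / prodZ (remove Req_EM_T t Z) t.
Proof. intro H; unfold wv; destruct (in_dec Req_EM_T t Z); [reflexivity|contradiction]. Qed.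

Lemma wv_out Z v v' t : ~ In t Z -> wv Z v v' t = v t / prodZ Z t.
Proof. intro H; unfold wv; destruct (in_dec Req_EM_T t Z); [contradiction|reflexivity]. Qed.

Lemma wv_cont a b Z v v' : NoDup Z -> (forall z, In z Z -> v z = 0) ->
  Rcont_on a b v -> Rderiv_on a b v v' -> Rcont_on a b (wv Z v v').
Proof.
intros ND HZ Cv Dv. apply cont_iff. intros t Ht.
destruct (avoid Z t) as [d [Hd Hav]].
assert (Hout : forall s, Rabs (s - t) < d -> s <> t -> ~ In s Z).
{ intros s Hs Hst Hin. specialize (Hav s Hin Hst). lra. }
destruct (in_dec Req_EM_T t Z) as [Hin|Hnin].
- apply lim_punct. rewrite wv_in by auto.
  apply (lim_ext_loc _ _ (fun s => ((v s - v t) / (s - t)) / prodZ (remove Req_EM_T t Z) s)).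
  + exists d; split; auto. intros s [Hs Hst] Hsd. rewrite wv_out by (apply Hout; auto).
    rewrite (prodZ_remove Z t s ND Hin), (HZ t Hin).
    assert (~ In s (remove Req_EM_T t Z)).
    { intro H; apply in_remove in H; apply (Hout s Hsd Hst); tauto. }
    assert (prodZ (remove Req_EM_T t Z) s <> 0) by (apply prodZ_nz; auto).
    field; split; auto; lra.
  + apply lim_div. rewrite deriv_iff in Dv; apply Dv; auto. apply prodZ_lim.
    apply prodZ_nz. apply remove_In.
- rewrite wv_out by auto.
  apply (lim_ext_loc _ _ (fun s => v s / prodZ Z s)).
  + exists d; split; auto. intros s Hs Hsd. rewrite wv_out; auto.
    destruct (Req_dec s t). subst; auto. apply Hout; auto.
  + apply lim_div. rewrite cont_iff in Cv; apply Cv; auto. apply prodZ_lim. apply prodZ_nz; auto.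
Qed.

Lemma cont_comb a b f g : Rcont_on a b f -> Rcont_on a b g -> Rcont_on a b (fun t => (f t - g t) / 2).
Proof. rewrite !cont_iff; intros Hf Hg t Ht. apply lim_div; [apply lim_minus; auto|apply lim_const|lra]. Qed.

Lemma cont_opp a b f : Rcont_on a b f -> Rcont_on a b (fun t => - f t).
Proof. rewrite !cont_iff; intros Hf t Ht. apply lim_opp; auto. Qed.

Lemma deriv_comb a b f f' g g' : Rderiv_on a b f f' -> Rderiv_on a b g g' ->
  Rderiv_on a b (fun t => (f t - g t) / 2) (fun t => (f' t - g' t) / 2).
Proof.
rewrite !deriv_iff; intros Hf Hg t Ht.
apply (lim_ext _ _ (fun s => ((f s - f t) / (s - t) - (g s - g t) / (s - t)) / 2)).
intros s [_ Hs]. field. lra.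
apply lim_div; [apply lim_minus; auto|apply lim_const|lra].
Qed.

Lemma M2_eta X : X = mkM2 (e11 X) (e12 X) (e21 X) (e22 X).
Proof. destruct X; reflexivity. Qed.

Lemma sum3_pos a b c k : (a <> 0 \/ b <> 0 \/ c <> 0) -> k <> 0 ->
  0 < (a / k) * (a / k) + (b / k) * (b / k) + (c / k) * (c / k).
Proof.
intros H Hk. replace ((a / k) * (a / k) + (b / k) * (b / k) + (c / k) * (c / k))
  with ((a*a + b*b + c*c) * (/k * /k)) by (field; auto).
apply Rmult_lt_0_compat. 
destruct H as [H|[H|H]]; [assert (0 < a*a) by nra| assert (0 < b*b) by nra| assert (0 < c*c) by nra]; nra.
assert (/k <> 0) by (apply Rinv_neq_0_compat; auto). nra.
Qed.

Theorem mainTheorem4 (a b : R) (A A' : R -> M2) :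
  a < b ->
  M2cont_on a b A ->
  (forall t, a <= t <= b -> hermitian (A t)) ->
  M2deriv_on a b A A' ->
  M2cont_on a b A' ->
  (exists l : list R, forall t, a <= t <= b ->
      ~ two_distinct_eigenvalues (A t) -> In t l) ->
  (forall t, a <= t <= b ->
      ~ two_distinct_eigenvalues (A t) -> two_distinct_eigenvalues (A' t)) ->
  exists U : R -> M2, M2cont_on a b U /\
    forall t, a <= t <= b ->
      unitary (U t) /\ diagonal (M2mul (M2mul (M2adj (U t)) (A t)) (U t)).
Proof.
intros Hab CA HH DA _ [l Hl] Hex.
destruct CA as [[C11r C11i] [[C12r C12i] [[C21r C21i] [C22r C22i]]]].
destruct DA as [[D11r D11i] [[D12r D12i] [[D21r D21i] [D22r D22i]]]].
simpl in *.
set (dd := fun t => (re (e11 (A t)) - re (e22 (A t))) / 2).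
set (dd' := fun t => (re (e11 (A' t)) - re (e22 (A' t))) / 2).
set (xx := fun t => re (e12 (A t))). set (xx' := fun t => re (e12 (A' t))).
set (yy := fun t => im (e12 (A t))). set (yy' := fun t => im (e12 (A' t))).
assert (Cdd : Rcont_on a b dd) by (apply cont_comb; auto).
assert (Ddd : Rderiv_on a b dd dd') by (apply deriv_comb; auto).
set (P := fun z => II a b z /\ dd z = 0 /\ xx z = 0 /\ yy z = 0).
assert (Pscal : forall z, P z -> ~ two_distinct_eigenvalues (A z)).
{ intros z [Hz [H1 [H2 H3]]]. destruct (herm_parts _ (HH z Hz)) as [K1 [K2 [K3 K4]]].
  unfold dd, xx, yy in *. apply scalar_not_two.
  - apply Cpx_ext; simpl; lra.
  - apply Cpx_ext; simpl; lra.
  - apply Cpx_ext; simpl; lra. }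
destruct (finite_set l P) as [Z [NDZ HZ]].
{ intros z Pz. apply Hl. apply Pz. apply Pscal; auto. }
assert (Hder : forall z, In z Z -> dd' z <> 0 \/ xx' z <> 0 \/ yy' z <> 0).
{ intros z Hz. apply HZ in Hz. destruct (Hz) as [Hzi _].
  apply NNPP; intro Hc. apply (fun NT : ~ two_distinct_eigenvalues (A' z) => NT (Hex z Hzi (Pscal z Hz))).
  assert (E1 : dd' z = 0) by (apply NNPP; tauto).
  assert (E2 : xx' z = 0) by (apply NNPP; tauto).
  assert (E3 : yy' z = 0) by (apply NNPP; tauto).
  assert (G1 : re (e21 (A' z)) = 1 * re (e12 (A' z))).
  { apply (deriv_lin a b (fun t => re (e21 (A t))) (fun t => re (e21 (A' t))) (fun t => re (e12 (A t))) (fun t => re (e12 (A' t))) 1 z); auto.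
    intros s Hs. destruct (herm_parts _ (HH s Hs)) as [K1 [K2 [K3 K4]]]. lra. }
  assert (G2 : im (e21 (A' z)) = -1 * im (e12 (A' z))).
  { apply (deriv_lin a b (fun t => im (e21 (A t))) (fun t => im (e21 (A' t))) (fun t => im (e12 (A t))) (fun t => im (e12 (A' t))) (-1) z); auto.
    intros s Hs. destruct (herm_parts _ (HH s Hs)) as [K1 [K2 [K3 K4]]]. lra. }
  assert (G3 : im (e11 (A' z)) = 0 * im (e11 (A' z))).
  { apply (deriv_lin a b (fun t => im (e11 (A t))) (fun t => im (e11 (A' t))) (fun t => im (e11 (A t))) (fun t => im (e11 (A' t))) 0 z); auto.
    intros s Hs. destruct (herm_parts _ (HH s Hs)) as [K1 [K2 [K3 K4]]]. lra. }
  assert (G4 : im (e22 (A' z)) = 0 * im (e22 (A' z))).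
  { apply (deriv_lin a b (fun t => im (e22 (A t))) (fun t => im (e22 (A' t))) (fun t => im (e22 (A t))) (fun t => im (e22 (A' t))) 0 z); auto.
    intros s Hs. destruct (herm_parts _ (HH s Hs)) as [K1 [K2 [K3 K4]]]. lra. }
  unfold dd', xx', yy' in *. apply scalar_not_two.
  - apply Cpx_ext; simpl; lra.
  - apply Cpx_ext; simpl; lra.
  - apply Cpx_ext; simpl; lra. }
assert (HZv : forall z, In z Z -> dd z = 0 /\ xx z = 0 /\ yy z = 0).
{ intros z Hz. apply HZ in Hz. apply Hz. }
set (w1 := wv Z dd dd'). set (w2 := wv Z xx xx'). set (w3 := wv Z yy yy').
assert (Cw1 : Rcont_on a b w1) by (apply wv_cont; auto; intros z Hz; apply HZv; auto).
assert (Cw2 : Rcont_on a b w2) by (apply wv_cont; auto; intros z Hz; apply HZv; auto).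
assert (Cw3 : Rcont_on a b w3) by (apply wv_cont; auto; intros z Hz; apply HZv; auto).
set (S := fun t => w1 t * w1 t + w2 t * w2 t + w3 t * w3 t).
assert (HS : forall t, II a b t -> 0 < S t).
{ intros t Ht. unfold S, w1, w2, w3. destruct (in_dec Req_EM_T t Z) as [Hin|Hnin].
  - rewrite !wv_in by auto. apply sum3_pos; auto. apply prodZ_nz, remove_In.
  - rewrite !wv_out by auto. apply sum3_pos; [|apply prodZ_nz; auto].
    apply NNPP; intro Hc. apply Hnin, HZ. unfold P. 
    repeat split; try apply Ht; apply NNPP; tauto. }
set (m1 := fun t => w1 t / sqrt (S t)).
set (m2 := fun t => w2 t / sqrt (S t)).
set (m3 := fun t => w3 t / sqrt (S t)).
assert (LS : forall t, II a b t -> limw (II a b) t (fun s => sqrt (S s)) (sqrt (S t))).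
{ intros t Ht. apply lim_sqrt; [|apply HS; auto]. rewrite cont_iff in Cw1, Cw2, Cw3.
  specialize (Cw1 t Ht); specialize (Cw2 t Ht); specialize (Cw3 t Ht).
  unfold S; lim_tac. }
assert (HSn : forall t, II a b t -> sqrt (S t) <> 0) by (intros t Ht; apply Rgt_not_eq, sqrt_lt_R0, HS; auto).
assert (Cm1 : Rcont_on a b m1).
{ apply cont_iff; intros t Ht. apply lim_div; auto. rewrite cont_iff in Cw1; auto. }
assert (Cm2 : Rcont_on a b m2).
{ apply cont_iff; intros t Ht. apply lim_div; auto. rewrite cont_iff in Cw2; auto. }
assert (Cm3 : Rcont_on a b m3).
{ apply cont_iff; intros t Ht. apply lim_div; auto. rewrite cont_iff in Cw3; auto. }
assert (Hm : forall t, a <= t <= b -> m1 t * m1 t + m2 t * m2 t + m3 t * m3 t = 1).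
{ intros t Ht. assert (H0 := HS t Ht). assert (H1 := HSn t Ht). unfold m1, m2, m3.
  transitivity (S t / (sqrt (S t) * sqrt (S t))). unfold S; field; auto.
  rewrite sqrt_sqrt by lra. field; lra. }
assert (Hmu : forall t, II a b t -> exists mu, dd t = mu * m1 t /\ xx t = mu * m2 t /\ yy t = mu * m3 t).
{ intros t Ht. destruct (in_dec Req_EM_T t Z) as [Hin|Hnin].
  - exists 0. destruct (HZv t Hin) as [K1 [K2 K3]]. rewrite K1, K2, K3. repeat split; ring.
  - exists (prodZ Z t * sqrt (S t)). assert (H1 := HSn t Ht).
    assert (prodZ Z t <> 0) by (apply prodZ_nz; auto).
    unfold m1, m2, m3, w1, w2, w3. rewrite !wv_out by auto. repeat split; field; auto. }
destruct (lift a b m1 m2 m3 Hab Cm1 Cm2 Cm3 Hm) as [u1 [u2 [u3 [u4 [K1 [K2 [K3 [K4 K5]]]]]]]].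
exists (fun t => Umat (u1 t) (u2 t) (u3 t) (u4 t)). split.
{ unfold M2cont_on, Ccont_on, Umat; simpl.
  repeat split; auto; apply cont_opp; auto. }
intros t Ht. destruct (K5 t Ht) as [Hn He]. split.
apply unitary_ok; auto.
destruct (Hmu t Ht) as [mu [E1 [E2 E3]]].
destruct (herm_parts _ (HH t Ht)) as [F1 [F2 [F3 F4]]].
set (s := (re (e11 (A t)) + re (e22 (A t))) / 2).
replace (A t) with (mkM2 (mkC (s + mu * m1 t) 0) (mkC (mu * m2 t) (mu * m3 t))
   (mkC (mu * m2 t) (- (mu * m3 t))) (mkC (s - mu * m1 t) 0)).
apply diag_ok; auto.
rewrite (M2_eta (A t)). unfold s, dd, xx, yy in *.
f_equal; apply Cpx_ext; simpl; lra.
Qed.
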